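(* In the setting below, let $M\in\mathcal M$ be a fixed model with $P_n(M)^{-1}e^{-\delta n}\to0$ as $n\to\infty$ for every $\delta>0$. Let $\tilde\theta^M_n=(\tilde\theta^M_{n,j})_{j=1}^p$ be an estimator (a function of $y_1,\dots,y_n$) that is unconditionally unbiased for $\theta^M_0$, and suppose there is a constant $C\in(0,\infty)$ such that for all $1\le j\le p$ and $n\ge1$ the distribution of $\sqrt n(\tilde\theta^M_{n,j}-\theta^M_{0,j})$ is sub-Gaussian with parameter $C$. Then for every $\varepsilon>0$, $$\lim_{n\to\infty}P\big(\|\tilde\theta^M_n-\theta^M_0\|_\infty>\varepsilon\,\big|\,S_n(\bar T_n)=M\big)=0.$$
   Context: Setting: $(y_i)_{i\ge1}$ are i.i.d. from a distribution $f^*$. $\{p_\theta:\theta\in\Theta\}$, $\Theta\subseteq\mathbb R^p$, is a regular exponential family with natural parameter $\theta$, sufficient statistic $T$, and log-likelihood $\ell_\theta(y)=\log p_\theta(y)$; $\bar T_n=n^{-1}\sum_{i=1}^nT(y_i)$. $\mathcal M$ is a countable set of submodels $M=\{p_\theta:\theta\in\Theta^M\}$, $\Theta^M\subseteq\Theta$. For each $n$, $S_n:\mathbb R^p\to\mathcal M$ is a model selection procedure applied to $\bar T_n$, and $P_n(M)=P_{f^*}(S_n(\bar T_n)=M)$ when $y_1,\dots,y_n$ are i.i.d. $f^*$. $f^*$ need not belong to any model. The target is $\theta^M_0=\arg\sup_{\theta\in\Theta^M}\mathbb E_{f^*}[\ell_\theta(y)]$ (assumed to exist). *)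

(* Defs.v *)
From HB Require Import structures.
From mathcomp Require Import all_boot all_order all_algebra.
From mathcomp Require Import all_classical all_reals all_analysis.
Set Implicit Arguments. Unset Strict Implicit. Unset Printing Implicit Defensive.
Import Order.TTheory GRing.Theory Num.Theory.
Import numFieldNormedType.Exports.
Local Open Scope classical_set_scope.
Local Open Scope ring_scope.

Definition dotp (R : realType) (p : nat) (a b : 'rV[R]_p) : R :=
  \sum_(j < p) a 0 j * b 0 j.

Definition supnorm (R : realType) (p : nat) (v : 'rV[R]_p) : R :=
  \big[Num.max/0]_(j < p) `|v 0 j|.

Definition logpart (R : realType) (dY : measure_display) (Y : measurableType dY)
  (nu : {measure set Y -> \bar R}) (p : nat) (T : Y -> 'rV[R]_p) (th : 'rV[R]_p) : R :=
  ln (fine (\int[nu]_y (expR (dotp th (T y)))%:E)).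

Definition loglik (R : realType) (dY : measure_display) (Y : measurableType dY)
  (nu : {measure set Y -> \bar R}) (p : nat) (T : Y -> 'rV[R]_p) (th : 'rV[R]_p) (y : Y) : R :=
  dotp th (T y) - logpart nu T th.

(* {p_theta : theta in Theta} is a regular (minimal, full, open) exponential
   family with natural parameter theta, sufficient statistic T, base measure nu:
   p_theta(y) = exp(theta . T(y) - A(theta)) d nu. *)
Definition regular_expfam (R : realType) (dY : measure_display) (Y : measurableType dY)
  (nu : {measure set Y -> \bar R}) (p : nat) (T : Y -> 'rV[R]_p) (Theta : set 'rV[R]_p) : Prop :=
  [/\ forall j, measurable_fun setT (fun y => T y 0 j),
      Theta = [set th | nu.-integrable setT (fun y => (expR (dotp th (T y)))%:E)],
      Theta !=set0,
      open Theta &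
      (* minimality: the components of T are affinely independent *)
      forall (a : 'rV[R]_p) (c : R),
        {ae nu, forall y, dotp a (T y) = c} -> a = 0].

Definition mutually_independent (R : realType) (d : measure_display) (Omega : measurableType d)
  (P : probability Omega R) (dY : measure_display) (Y : measurableType dY)
  (y : nat -> Omega -> Y) : Prop :=
  forall (s : seq nat) (B : nat -> set Y), uniq s ->
    (forall i, measurable (B i)) ->
    fine (P (\big[setI/setT]_(i <- s) (y i @^-1` B i))) =
    \prod_(i <- s) fine (P (y i @^-1` B i)).

Definition subgaussian (R : realType) (d : measure_display) (Omega : measurableType d)
  (P : probability Omega R) (X : Omega -> R) (C : R) : Prop :=
  P.-integrable setT (EFin \o X) /\
  forall lam : R,
    (\int[P]_w (expR (lam * (X w - fine (\int[P]_v (X v)%:E))))%:E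
       <= (expR (C ^+ 2 * lam ^+ 2 / 2))%:E)%E.

(* empirical mean of the sufficient statistic, \bar T_n (y_1..y_n are y 0 .. y (n-1)) *)
Definition Tbar (R : realType) (d : measure_display) (Omega : measurableType d)
  (dY : measure_display) (Y : measurableType dY) (p : nat) (T : Y -> 'rV[R]_p)
  (y : nat -> Omega -> Y) (n : nat) (w : Omega) : 'rV[R]_p :=
  n%:R^-1 *: \sum_(i < n) T (y i w).

(* Main.v *)
Require Import Defs.
From HB Require Import structures.
From mathcomp Require Import all_boot all_order all_algebra.
From mathcomp Require Import all_classical all_reals all_analysis.
From mathcomp Require Import measurable_realfun ring lra.
Import Order.TTheory GRing.Theory Num.Theory.
Import numFieldNormedType.Exports.
Local Open Scope classical_set_scope.
Local Open Scope ring_scope.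

Lemma chern (R : realType) (d : measure_display) (Omega : measurableType d)
  (P : probability Omega R) (X : Omega -> R) (C lam t : R) :
  measurable_fun setT X -> subgaussian P X C ->
  fine (\int[P]_w (X w)%:E) = 0 -> 0 <= lam ->
  (\int[P]_w (expR (- (lam * t)) * (expR (lam * X w) + expR (- lam * X w)))%:E
    <= (expR (- (lam * t)) * (expR (C ^+ 2 * lam ^+ 2 / 2) + expR (C ^+ 2 * lam ^+ 2 / 2)))%:E)%E.
Proof.
move=> mX [_ sg] m0 lam0.
have h1 : (\int[P]_w (expR (lam * X w))%:E <= (expR (C ^+ 2 * lam ^+ 2 / 2))%:E)%E.
  by have := sg lam; under eq_integral do rewrite m0 subr0.
have h2 : (\int[P]_w (expR (- lam * X w))%:E <= (expR (C ^+ 2 * lam ^+ 2 / 2))%:E)%E.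
  by have := sg (- lam); rewrite sqrrN; under eq_integral do rewrite m0 subr0.
have me1 : measurable_fun setT (EFin \o (fun w => expR (lam * X w))).
  apply/measurable_EFinP; apply: measurableT_comp; first exact: measurable_expR.
  exact: measurable_funM.
have me2 : measurable_fun setT (EFin \o (fun w => expR (- lam * X w))).
  apply/measurable_EFinP; apply: measurableT_comp; first exact: measurable_expR.
  exact: measurable_funM.
under eq_integral do rewrite EFinM EFinD.
rewrite ge0_integralZl_EFin//; last 2 first.
- by move=> w _; rewrite adde_ge0// lee_fin expR_ge0.
- exact: emeasurable_funD me1 me2.
rewrite ge0_integralD//; try by move=> w _; rewrite lee_fin expR_ge0.
rewrite EFinM EFinD; apply: lee_wpmul2l; first by rewrite lee_fin expR_ge0.
exact: leeD.
Qed.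

Lemma supnorm_gt (R : realType) (p : nat) (v : 'rV[R]_p) (eps : R) :
  0 < eps -> eps < supnorm v -> exists j, eps < `|v 0 j|.
Proof.
move=> e0; rewrite /supnorm.
elim/big_ind: _.
- by move=> h; have := lt_trans e0 h; rewrite ltxx.
- by move=> x y hx hy; rewrite lt_max => /orP[/hx|/hy].
- by move=> j _ h; exists j.
Qed.

Lemma measurable_supnorm (R : realType) (d : measure_display) (Omega : measurableType d)
  (p : nat) (f : Omega -> 'rV[R]_p) :
  (forall j, measurable_fun setT (fun w => f w 0 j)) ->
  measurable_fun setT (fun w => supnorm (f w)).
Proof.
move=> mf; rewrite /supnorm.
elim: (index_enum _) => [|j s ih].
  by under eq_fun do rewrite big_nil; exact: measurable_cst.
under eq_fun do rewrite big_cons.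
apply: measurable_maxr => //.
apply: measurableT_comp => //; exact: normr_measurable.
Qed.

Lemma tail (R : realType) (d : measure_display) (Omega : measurableType d)
  (P : probability Omega R) (p : nat) (th : Omega -> 'rV[R]_p) (th0 : 'rV[R]_p)
  (C eps s lam : R) :
  (forall j, measurable_fun setT (fun w => th w 0 j)) ->
  (forall j, subgaussian P (fun w => s * (th w 0 j - th0 0 j)) C) ->
  (forall j, fine (\int[P]_w (s * (th w 0 j - th0 0 j))%:E) = 0) ->
  0 < s -> 0 < eps -> 0 <= lam ->
  fine (P [set w | supnorm (th w - th0) > eps]) <=
    p%:R * (expR (- (lam * (s * eps))) *
      (expR (C ^+ 2 * lam ^+ 2 / 2) + expR (C ^+ 2 * lam ^+ 2 / 2))).
Proof.
move=> mth sg m0 s0 e0 lam0.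
set A := [set w | _].
set t := s * eps.
set b := expR (- (lam * t)) * _.
have mX j : measurable_fun setT (fun w => s * (th w 0 j - th0 0 j)).
  apply: measurable_funM => //; apply: measurable_funB => //.
have mA : measurable A.
  have -> : A = (fun w => supnorm (th w - th0)) @^-1` `]eps, +oo[.
    by apply/seteqP; split => w; rewrite /= in_itv /= andbT.
  rewrite -[X in measurable X]setTI.
  have ms : measurable_fun setT (fun w => supnorm (th w - th0)).
    apply: measurable_supnorm => j; under eq_fun do rewrite !mxE.
    exact: measurable_funB.
  exact: ms measurableT _ (measurable_itv _).
pose g (j : 'I_p) w := expR (- (lam * t)) *
  (expR (lam * (s * (th w 0 j - th0 0 j))) + expR (- lam * (s * (th w 0 j - th0 0 j)))).
have g0 j w : 0 <= g j w by rewrite mulr_ge0 ?addr_ge0 ?expR_ge0.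
have mg j : measurable_fun setT (EFin \o g j).
  apply/measurable_EFinP; apply: measurable_funM => //.
  apply: measurable_funD; (apply: measurableT_comp; first exact: measurable_expR);
    exact: measurable_funM.
have PAE : P A = (fine (P A))%:E by rewrite fineK// fin_num_measure.
suff : (P A <= (p%:R * b)%:E)%E by rewrite PAE lee_fin.
rewrite -(setIT A) -integral_indic//.
apply: (@le_trans _ _ (\int[P]_w (\sum_(j < p) (g j w)%:E))%E).
  apply: ge0_le_integral => //.
  - by apply/measurable_EFinP; exact: measurable_indic.
  - exact: emeasurable_sum.
  move=> w _; rewrite sumEFin lee_fin indicE; case: (boolP (w \in A)) => wA; last first.
    by rewrite /= sumr_ge0.
  have [j hj] : exists j, eps < `|(th w - th0) 0 j|.
    by apply: supnorm_gt => //; move: wA; rewrite inE.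
  rewrite (bigD1 j)//= -[1%:R]addr0 lerD ?sumr_ge0//.
  rewrite !mxE in hj.
  have ht : t < `|s * (th w 0 j - th0 0 j)|.
    by rewrite normrM gtr0_norm// /t ltr_pM2l.
  set x := s * _ in ht *.
  rewrite /g -/x.
  apply: (@le_trans _ _ (expR (- (lam * t)) * expR (lam * `|x|))).
    rewrite -expRD -expR0 ler_expR addrC subr_ge0.
    by apply: ler_wpM2l => //; exact: ltW.
  apply: ler_wpM2l; first exact: expR_ge0.
  case: (ler0P x) => hx.
    by rewrite mulrN -mulNr lerDr expR_ge0.
  by rewrite lerDl expR_ge0.
rewrite ge0_integral_sum//; last by move=> j w _; rewrite lee_fin.
apply: (@le_trans _ _ (\sum_(j < p) b%:E)%E).
  apply: lee_sum => j _.
  exact: (chern _ _ _ _ _ C lam t (mX j) (sg j) (m0 j) lam0).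
by rewrite sumEFin lee_fin sumr_const card_ord mulr_natl.
Qed.

Lemma mean0 (R : realType) (d : measure_display) (Omega : measurableType d)
  (P : probability Omega R) (f : Omega -> R) (c s : R) :
  P.-integrable setT (fun w => (f w)%:E) -> (\int[P]_w (f w)%:E = c%:E)%E ->
  fine (\int[P]_w (s * (f w - c))%:E) = 0.
Proof.
move=> intf hf.
have intc : P.-integrable setT (EFin \o cst c) by exact: finite_measure_integrable_cst.
have intB : P.-integrable setT (fun w => (f w - c)%:E).
  by have := integrableB measurableT intf intc.
under eq_integral do rewrite EFinM.
rewrite integralZl//.
under eq_integral do rewrite EFinB.
rewrite integralB_EFin// hf.
have -> : (\int[P]_x (EFin \o cst c) x = c%:E)%E.
  by rewrite (integral_cst P measurableT c%:E) /= probability_setT mule1.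
by rewrite subee// mule0.
Qed.

Lemma measA (R : realType) (d : measure_display) (Omega : measurableType d)
  (p : nat) (th : Omega -> 'rV[R]_p) (th0 : 'rV[R]_p) (eps : R) :
  (forall j, measurable_fun setT (fun w => th w 0 j)) ->
  measurable [set w | supnorm (th w - th0) > eps].
Proof.
move=> mth.
have -> : [set w | supnorm (th w - th0) > eps] =
    (fun w => supnorm (th w - th0)) @^-1` `]eps, +oo[.
  by apply/seteqP; split => w; rewrite /= in_itv /= andbT.
rewrite -[X in measurable X]setTI.
have ms : measurable_fun setT (fun w => supnorm (th w - th0)).
  apply: measurable_supnorm => j; under eq_fun do rewrite !mxE.
  exact: measurable_funB.
exact: ms measurableT _ (measurable_itv _).
Qed.

Lemma algebra_step (R : realType) (n : nat) (eps C : R) : 0 < C ->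
  let t := Num.sqrt n%:R * eps in let lam := t / C ^+ 2 in
  expR (- (lam * t)) * (expR (C ^+ 2 * lam ^+ 2 / 2) + expR (C ^+ 2 * lam ^+ 2 / 2))
  = 2 * expR (- (eps ^+ 2 / (2 * C ^+ 2) * n%:R)).
Proof.
move=> C0 t lam.
have hq : Num.sqrt n%:R ^+ 2 = n%:R :> R by rewrite sqr_sqrtr.
have Cn : C != 0 by rewrite gt_eqF.
have E (a b : R) : expR a * (expR b + expR b) = 2 * expR (a + b) by rewrite expRD; ring.
rewrite E; congr (2 * expR _).
rewrite /lam /t; move: hq; move: (Num.sqrt n%:R) => q hq; rewrite -hq; field; exact: Cn.
Qed.

Theorem theorem3
  (R : realType) (d : measure_display) (Omega : measurableType d)
  (P : probability Omega R)
  (dY : measure_display) (Y : measurableType dY)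
  (fstar : probability Y R)
  (y : nat -> Omega -> Y)
  (p : nat) (T : Y -> 'rV[R]_p) (nu : {measure set Y -> \bar R})
  (Theta : set 'rV[R]_p)
  (Mods : countType) (ThetaM : Mods -> set 'rV[R]_p)
  (S : nat -> 'rV[R]_p -> Mods)
  (M : Mods) (theta0 : 'rV[R]_p)
  (thetat : nat -> Omega -> 'rV[R]_p) (C : R) :
  (* i.i.d. sample from f^* *)
  (forall i, measurable_fun setT (y i)) ->
  mutually_independent P y ->
  (forall i (B : set Y), measurable B -> P (y i @^-1` B) = fstar B) ->
  (* regular exponential family and the countable collection of submodels *)
  regular_expfam nu T Theta ->
  (forall m, ThetaM m `<=` Theta) ->
  (* model selection events are events *)
  (forall n m, measurable [set w | S n (Tbar T y n w) = m]) ->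
  (* theta0 = theta^M_0 = argsup_{theta in Theta^M} E_{f^*}[l_theta(y)] *)
  theta0 \in ThetaM M ->
  (forall th, th \in ThetaM M ->
     (\int[fstar]_u (loglik nu T th u)%:E <= \int[fstar]_u (loglik nu T theta0 u)%:E)%E) ->
  (* P_n(M)^{-1} e^{-delta n} -> 0 for every delta > 0 *)
  (\forall n \near \oo, 0 < fine (P [set w | S n (Tbar T y n w) = M])) ->
  (forall delta : R, 0 < delta ->
     (fun n : nat => (fine (P [set w | S n (Tbar T y n w) = M]))^-1
                      * expR (- (delta * n%:R))) @ \oo --> 0) ->
  (* the estimator is a measurable function of y_1, ..., y_n *)
  (forall n j, measurable_fun setT (fun w => thetat n w 0 j)) ->
  (forall n, exists g : ('I_n -> Y) -> 'rV[R]_p,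
     forall w, thetat n w = g (fun i => y i w)) ->
  (* unconditionally unbiased for theta0 *)
  (forall n j, (0 < n)%N ->
     P.-integrable setT (fun w => (thetat n w 0 j)%:E) /\
     (\int[P]_w (thetat n w 0 j)%:E = (theta0 0 j)%:E)%E) ->
  (* uniform sub-Gaussianity of sqrt n (thetat_{n,j} - theta0_j) *)
  0 < C ->
  (forall n j, (0 < n)%N ->
     subgaussian P (fun w => Num.sqrt n%:R * (thetat n w 0 j - theta0 0 j)) C) ->
  forall eps : R, 0 < eps ->
    (fun n : nat =>
       fine (P ([set w | supnorm (thetat n w - theta0) > eps]
                `&` [set w | S n (Tbar T y n w) = M]))
       / fine (P [set w | S n (Tbar T y n w) = M])) @ \oo --> 0.
Proof.
move=> my indep iid rexp sub mS th0M th0max Ppos Pexp mth gth unb C0 sg eps e0.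
set delta := eps ^+ 2 / (2 * C ^+ 2).
have d0 : 0 < delta by rewrite divr_gt0 ?exprn_gt0 ?mulr_gt0 ?exprn_gt0.
have hl := Pexp delta d0.
apply: (@squeeze_cvgr _ _ _ _ (fun _ => 0)
  (fun n : nat => (2 * p%:R) * ((fine (P [set w | S n (Tbar T y n w) = M]))^-1
                      * expR (- (delta * n%:R))))).
- near=> n.
  have n0 : (0 < n)%N by near: n; exists 1%N.
  set B := [set w | S n (Tbar T y n w) = M].
  set A := [set w | supnorm (thetat n w - theta0) > eps].
  have mA : measurable A by exact: measA.
  have mB : measurable B by exact: mS.
  have iB : 0 <= (fine (P B))^-1 by rewrite invr_ge0 fine_ge0.
  apply/andP; split.
    by rewrite divr_ge0 ?fine_ge0.
  apply: (@le_trans _ _ (fine (P A) * (fine (P B))^-1)).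
    apply: ler_wpM2r => //; apply: fine_le.
    - by rewrite fin_num_measure//; exact: measurableI.
    - by rewrite fin_num_measure.
    - by apply: le_measure; rewrite ?inE //; apply: measurableI.
  have ht := @tail R d Omega P p (thetat n) theta0 C eps (Num.sqrt n%:R)
     (Num.sqrt n%:R * eps / C ^+ 2) (mth n) (fun j => sg n j n0)
     (fun j => @mean0 _ _ _ P _ _ _ (unb n j n0).1 (unb n j n0).2).
  rewrite algebra_step// in ht.
  have sn0 : 0 < Num.sqrt n%:R :> R by rewrite sqrtr_gt0 ltr0n.
  have l0 : 0 <= Num.sqrt n%:R * eps / C ^+ 2.
    by rewrite divr_ge0 ?mulr_ge0 ?exprn_ge0 ?ltW.
  have hA := ht sn0 e0 l0.
  apply: (le_trans (ler_wpM2r iB hA)).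
  by rewrite /delta le_eqVlt; apply/orP; left; apply/eqP; ring.
- exact: cvg_cst.
- rewrite -(mulr0 (2 * p%:R)).
  exact: cvgM (cvg_cst _) hl.
Unshelve. all: by end_near.
Qed.
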